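(* Let $w\in\mathbb{Q}^{V_+}_{\ge0}$ and $b\in\mathbb{Z}^{V_+}_{\ge0}$ be such that $\Pi(R)\cap[\mathbf 0,b]^N\ne\emptyset$ for every route $R$, and let $\mathcal{Q}^*(R)=\min\{\sum_{\xi\in[N]}\sum_{v\in V_+}p_\xi w_vy^\xi_v: y\in\Pi(R)\cap[\mathbf 0,b]^N\}$. Suppose values $\mathcal{Q}^*(R,v)$ are given such that for every route $R$ there exists an optimal solution $y^*$ of this minimization with $\mathcal{Q}^*(R,v)=\sum_{\xi\in[N]}p_\xi w_v(y^* )^\xi_v$ for every $v\in V_+$. Then for every route $R$ and every subroute $R'\subseteq R$, $$\sum_{v\in V_+(R')}\mathcal{Q}^*(R',v)\le\sum_{v\in V_+(R')}\mathcal{Q}^*(R,v).$$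
   Context: $G=(V,E)$ complete undirected graph with $V=\{0\}\cup V_+$ ($0$ depot, $V_+$ customers); $D=(V,A)$ replaces each edge by two opposite arcs. Capacity $C>0$; scenarios $\xi\in[N]$ with demands $d^\xi\in\mathbb{Q}^{V_+}_{\ge0}$, $d^\xi(v)\le C$, and probabilities $p_\xi\ge0$, $\sum_\xi p_\xi=1$. A route $R=(v_1,\dots,v_\ell)$ is the cycle $0,v_1,\dots,v_\ell,0$ through distinct customers, $V_+(R)=\{v_1,\dots,v_\ell\}$, $v_0=v_{\ell+1}=0$; a subroute is $R'=(v_i,\dots,v_j)$, $1\le i\le j\le\ell$. Vectors $y\in\mathbb{R}^{[N]\times V_+}$ have entries $y^\xi_v$. For a route $R$ and $\xi$, $\mathcal{Y}^\xi(R)$ is the set of $y^\xi\in\mathbb{Z}^{V_+}_{\ge0}$ for which there exist $f\in\mathbb{R}^A_{\ge0}$, $g\in\mathbb{R}^{V_+}_{\ge0}$ with $f_{(v_{i-1},v_i)}+d^\xi(v_i)=f_{(v_i,v_{i+1})}+g_{v_i}$ ($i\in[\ell]$), $f_{(v_{i-1},v_i)}\le C$ ($i\in[\ell+1]$), $g_{v_i}\le Cy^\xi_{v_i}$ ($i\in[\ell]$). $\Pi(R)=\mathcal{Y}^1(R)\times\cdots\times\mathcal{Y}^N(R)$. $[\mathbf 0,b]^N=\{y:0\le y^\xi_v\le b_v\}$. *)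

(* Defs.v *)
From HB Require Import structures.
From mathcomp Require Import all_boot all_order all_algebra.
From mathcomp Require Import reals.
Set Implicit Arguments. Unset Strict Implicit. Unset Printing Implicit Defensive.
Import Order.TTheory GRing.Theory Num.Theory.
Local Open Scope ring_scope.

(* Customers V_+ form a finite type V; vertices of G are [option V]
   with [None] the depot 0.  Arcs of D are pairs of vertices. *)

(* A route R = (v_1,...,v_l) is a duplicate-free sequence of customers.
   node s i = v_i, with v_0 = v_{l+1} = depot (None). *)
Definition node (V : Type) (s : seq V) (i : nat) : option V :=
  nth None (None :: map Some s) i.

Definition is_route (V : eqType) (s : seq V) : bool := (s != [::]) && uniq s.

Definition is_subroute (V : eqType) (s' s : seq V) : bool :=
  (s' != [::]) && infix s' s.

Definition inY (R : realType) (V : finType) (C : rat) (dxi : V -> rat)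
    (s : seq V) (y : V -> nat) : Prop :=
  exists (f : option V -> option V -> R) (g : V -> R),
    [/\ forall a a', 0 <= f a a',
        forall v, 0 <= g v,
        forall i v, (0 < i <= size s)%N -> node s i = Some v ->
          f (node s i.-1) (Some v) + ratr (dxi v) = f (Some v) (node s i.+1) + g v,
        forall i, (0 < i <= (size s).+1)%N -> f (node s i.-1) (node s i) <= ratr C &
        forall i v, (0 < i <= size s)%N -> node s i = Some v ->
          g v <= ratr C * (y v)%:R].

Definition inPiBox (R : realType) (V : finType) (N : nat) (C : rat)
    (d : 'I_N -> V -> rat) (b : V -> nat) (s : seq V) (y : 'I_N -> V -> nat) : Prop :=
  (forall xi, inY R C (d xi) s (y xi)) /\ (forall xi v, (y xi v <= b v)%N).

Definition cost (V : finType) (N : nat) (p : 'I_N -> rat) (w : V -> rat)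
    (y : 'I_N -> V -> nat) : rat :=
  \sum_(xi < N) \sum_(v : V) p xi * w v * (y xi v)%:R.

Definition optimal (R : realType) (V : finType) (N : nat) (C : rat)
    (d : 'I_N -> V -> rat) (p : 'I_N -> rat) (w : V -> rat) (b : V -> nat)
    (s : seq V) (y : 'I_N -> V -> nat) : Prop :=
  inPiBox R C d b s y /\
  forall y', inPiBox R C d b s y' -> cost p w y <= cost p w y'.

(* Main.v *)
Require Import Defs.
From HB Require Import structures.
From mathcomp Require Import all_boot all_order all_algebra.
From mathcomp Require Import reals zify.
Import Order.TTheory GRing.Theory Num.Theory.
Local Open Scope ring_scope.
Set Implicit Arguments. Unset Strict Implicit.
Lemma node_shift (V : eqType) (a s' c : seq V) i :
  (0 < i <= size s')%N -> node (a ++ s' ++ c) (size a + i) = node s' i.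
Proof.
case: i => [//|j] /= Hj.
rewrite addnS /node /= map_cat nth_cat size_map ltnNge leq_addr /= addKn.
by rewrite map_cat nth_cat size_map Hj.
Qed.

Lemma node_some (V : eqType) (s' : seq V) i :
  (0 < i <= size s')%N -> exists v, node s' i = Some v /\ v \in s'.
Proof.
case: i => [//|j] /= Hj.
have : nth None (map Some s') j \in map Some s' by apply: mem_nth; rewrite size_map.
rewrite /node /=; case/mapP => v Hv ->. by exists v.
Qed.

Lemma node_mem (V : eqType) (s' : seq V) i v :
  node s' i = Some v -> v \in s'.
Proof.
case: i => [//|j]; rewrite /node /= => H.
case: (ltnP j (size s')) => Hj.
  have : nth None (map Some s') j \in map Some s' by apply: mem_nth; rewrite size_map.
  by rewrite H mem_map //; move=> x y [].
by rewrite nth_default ?size_map in H.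
Qed.

Lemma node_end (V : eqType) (s' : seq V) : node s' (size s').+1 = None.
Proof. by rewrite /node /= nth_default ?size_map. Qed.
Lemma inY_sub (R : realType) (V : finType) (C : rat) (dxi : V -> rat)
   (a s' c : seq V) (y : V -> nat) :
  inY R C dxi (a ++ s' ++ c) y ->
  inY R C dxi s' (fun v => if v \in s' then y v else 0%N).
Proof.
set s := a ++ s' ++ c.
case=> f [g [Hf Hg Hc Hb Hy]].
pose F1 (u : option V) := if u is None then node s (size a) else u.
pose F2 (u : option V) := if u is None then node s (size a + size s').+1 else u.
have L1 j : (j <= size s')%N -> F1 (node s' j) = node s (size a + j).
  case: j => [|j] Hj; first by rewrite addn0.
  have Hj' : (0 < j.+1 <= size s')%N by [].
  by rewrite /s node_shift //; case: (node_some Hj') => v [-> _].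
have L2 j : (0 < j <= (size s').+1)%N -> F2 (node s' j) = node s (size a + j).
  move=> Hj; case: (ltnP (size s') j) => Hlt.
    have -> : j = (size s').+1 by lia.
    by rewrite node_end /F2 addnS.
  have Hj' : (0 < j <= size s')%N by lia.
  by rewrite /s node_shift //; case: (node_some Hj') => v [-> _].
have Hsz : size s = (size a + size s' + size c)%N by rewrite /s !size_cat addnA.
exists (fun u u' => f (F1 u) (F2 u')), g; split => //.
- move=> i v Hi Hv.
  have E1 : node s' i.-1 = node s' i.-1 by [].
  rewrite L1; last by lia.
  rewrite (L2 i.+1); last by lia.
  have Hv' : node s (size a + i) = Some v by rewrite /s node_shift.
  have := Hc (size a + i)%N v ltac:(lia) Hv'.
  have -> : (size a + i).-1 = (size a + i.-1)%N by lia.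
  by rewrite addnS.
- move=> i Hi.
  rewrite L1; last by lia.
  rewrite L2 //.
  have := Hb (size a + i)%N ltac:(lia).
  by have -> : (size a + i).-1 = (size a + i.-1)%N by lia.
- move=> i v Hi Hv.
  rewrite (node_mem Hv).
  apply: (Hy (size a + i)%N v); first by lia.
  by rewrite /s node_shift.
Qed.

Theorem corollary2 (R : realType) (V : finType) (N : nat) (C : rat)
    (d : 'I_N -> V -> rat) (p : 'I_N -> rat) (w : V -> rat) (b : V -> nat)
    (Qv : seq V -> V -> rat) :
  0 < C ->
  (forall xi v, 0 <= d xi v <= C) ->
  (forall xi, 0 <= p xi) ->
  \sum_(xi < N) p xi = 1 ->
  (forall v, 0 <= w v) ->
  (forall s, is_route s -> exists y, inPiBox R C d b s y) ->
  (forall s, is_route s -> exists y, optimal R C d p w b s y /\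
      forall v, Qv s v = \sum_(xi < N) p xi * w v * (y xi v)%:R) ->
  forall s s', is_route s -> is_subroute s' s ->
    \sum_(v <- s') Qv s' v <= \sum_(v <- s') Qv s v.
Proof.
move=> _ _ Hp _ Hw _ Hopt s s' Hs /andP[Hne /infixP [a [c Es]]].
have Hu : uniq s' by move: Hs; rewrite /is_route Es !cat_uniq => /andP[_] /and3P[_ _] /andP[].
have Hs' : is_route s' by rewrite /is_route Hne Hu.
have [y [[Py _] Qy]] := Hopt s Hs.
have [y' [[Py' Oy'] Qy']] := Hopt s' Hs'.
pose t (z : 'I_N -> V -> nat) v := \sum_(xi < N) p xi * w v * (z xi v)%:R.
have t0 z v : 0 <= t z v.
  by apply: sumr_ge0 => xi _; rewrite !mulr_ge0 ?ler0n.
have costE z : cost p w z = \sum_v t z v by rewrite /cost exchange_big.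
pose z xi v := if v \in s' then y xi v else 0%N.
have Pz : inPiBox R C d b s' z.
  split.
    by move=> xi; apply: (@inY_sub R V C (d xi) a s' c); rewrite -Es; case: Py => H _; apply: H.
  move=> xi v; rewrite /z; case: (v \in s') => //; by case: Py => _ H; apply: H.
have H1 := Oy' z Pz.
under eq_bigr => v _ do rewrite Qy'.
under [X in _ <= X]eq_bigr => v _ do rewrite Qy.
rewrite !big_uniq //.
apply: (le_trans _ (le_trans H1 _)).
  rewrite costE [X in _ <= X](bigID (fun v => v \in s')) /= -[X in X <= _]addr0.
  by apply: lerD => //; apply: sumr_ge0.
rewrite costE (bigID (fun v => v \in s')) /=.
rewrite [X in _ + X]big1 ?addr0; last first.
  move=> v /negbTE Hv; apply: big1 => xi _; by rewrite /z Hv mulr0.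
rewrite le_eqVlt; apply/orP; left; apply/eqP; apply: eq_bigr => v Hv; apply: eq_bigr => xi _; by rewrite /z Hv.
Qed.
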